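(* For every formula $A$ of $\mathrm{SN}$: $A$ is true at both worlds $1$ and $2$ of every $\mathrm{SN}$-model if and only if $\mathrm{SN}\vdash A$.
   Context: Formulas of $\mathrm{SN}$ are built from propositional atoms $p$, constants $\top,\bot$ and a propositional constant $t$, using $\neg,\wedge,\vee,\to$ and a unary connective $N$ (applicable to any formula, iterable). Proof system: $\mathrm{SN}\vdash A$ is generated by all classical tautologies; axioms (K) $N(A\wedge B)\leftrightarrow NA\vee NB$; (F) $\neg NA\leftrightarrow N\neg A$; (C) $A\to NNA$; (A) $t\to(p\to N\neg p)$ for atoms $p$; (T) $t\leftrightarrow Nt$; rules modus ponens and (N): from $A$ infer $N\neg A$. Semantics: an $\mathrm{SN}$-model is $M=(\{1,2\},v)$ where $v$ assigns to each atom $p$ a subset $v(p)\subseteq\{1,2\}$ such that $1\in v(p)$ implies $2\in v(p)$. Truth at $m\in\{1,2\}$: $m\vDash p$ iff $m\in v(p)$; $m\vDash\top$; $m\nvDash\bot$; $m\vDash t$ iff $m=1$; classical clauses for $\neg,\wedge,\vee,\to$ at each world; $1\vDash NA$ iff $2\nvDash A$, and $2\vDash NA$ iff $1\nvDash A$. *)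

(* Defs.v *)
From Stdlib Require Import Bool.

Inductive form : Type :=
| Atom : nat -> form
| Top : form
| Bot : form
| TT : form
| Neg : form -> form
| And : form -> form -> form
| Or : form -> form -> form
| Imp : form -> form -> form
| Nn : form -> form.

Definition Iff (A B : form) : form := And (Imp A B) (Imp B A).

(* Classical (boolean) evaluation in which the "propositionally atomic"
   formulas (atoms, t, and N-formulas) receive arbitrary truth values
   given by f.  A classical tautology of SN is a formula true under every
   such evaluation (i.e. a substitution instance of a propositional
   tautology). *)
Fixpoint ceval (f : form -> bool) (A : form) : bool :=
  match A with
  | Atom _ => f A
  | Top => true
  | Bot => false
  | TT => f A
  | Neg B => negb (ceval f B)
  | And B C => ceval f B && ceval f C
  | Or B C => ceval f B || ceval f C
  | Imp B C => implb (ceval f B) (ceval f C)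
  | Nn _ => f A
  end.

Definition tautology (A : form) : Prop := forall f : form -> bool, ceval f A = true.

Inductive SN_prov : form -> Prop :=
| ax_taut : forall A, tautology A -> SN_prov A
| ax_K : forall A B, SN_prov (Iff (Nn (And A B)) (Or (Nn A) (Nn B)))
| ax_F : forall A, SN_prov (Iff (Neg (Nn A)) (Nn (Neg A)))
| ax_C : forall A, SN_prov (Imp A (Nn (Nn A)))
| ax_A : forall p, SN_prov (Imp TT (Imp (Atom p) (Nn (Neg (Atom p)))))
| ax_T : SN_prov (Iff TT (Nn TT))
| rule_MP : forall A B, SN_prov (Imp A B) -> SN_prov A -> SN_prov B
| rule_N : forall A, SN_prov A -> SN_prov (Nn (Neg A)).

(* Worlds {1,2}: world 1 is [true], world 2 is [false]. *)
Definition world := bool.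
Definition w1 : world := true.
Definition w2 : world := false.

Record SN_model : Type := {
  val : nat -> world -> Prop;
  val_mono : forall p, val p w1 -> val p w2
}.

Fixpoint sat (M : SN_model) (m : world) (A : form) : Prop :=
  match A with
  | Atom p => val M p m
  | Top => True
  | Bot => False
  | TT => m = w1
  | Neg B => ~ sat M m B
  | And B C => sat M m B /\ sat M m C
  | Or B C => sat M m B \/ sat M m C
  | Imp B C => sat M m B -> sat M m C
  | Nn B => ~ sat M (negb m) B
  end.

(* Main.v *)
Require Import Defs.
From Stdlib Require Import Bool Classical ClassicalEpsilon.

Ltac taut := let f := fresh "f" in intro f; simpl;
  repeat match goal with
  | |- context [ceval f ?X] => destruct (ceval f X)
  | |- context [f ?X] => destruct (f X)
  end; reflexivity.

Lemma tmp1 P1 C : SN_prov P1 -> tautology (Imp P1 C) -> SN_prov C.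
Proof. intros H1 T. eapply rule_MP; [apply ax_taut, T|]; auto. Qed.
Lemma tmp2 P1 P2 C : SN_prov P1 -> SN_prov P2 -> tautology (Imp P1 (Imp P2 C)) -> SN_prov C.
Proof. intros H1 H2 T. eapply rule_MP; [eapply rule_MP; [apply ax_taut, T|]|]; auto. Qed.
Lemma tmp3 P1 P2 P3 C : SN_prov P1 -> SN_prov P2 -> SN_prov P3 ->
  tautology (Imp P1 (Imp P2 (Imp P3 C))) -> SN_prov C.
Proof. intros H1 H2 H3 T. eapply rule_MP; [eapply tmp2; [exact H1|exact H2|exact T]|exact H3]. Qed.
Lemma tmp4 P1 P2 P3 P4 C : SN_prov P1 -> SN_prov P2 -> SN_prov P3 -> SN_prov P4 ->
  tautology (Imp P1 (Imp P2 (Imp P3 (Imp P4 C)))) -> SN_prov C.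
Proof. intros H1 H2 H3 H4 T. eapply rule_MP; [eapply tmp3; [exact H1|exact H2|exact H3|exact T]|exact H4]. Qed.
Lemma tmp5 P1 P2 P3 P4 P5 C : SN_prov P1 -> SN_prov P2 -> SN_prov P3 -> SN_prov P4 -> SN_prov P5 ->
  tautology (Imp P1 (Imp P2 (Imp P3 (Imp P4 (Imp P5 C))))) -> SN_prov C.
Proof. intros H1 H2 H3 H4 H5 T. eapply rule_MP; [eapply tmp4; [exact H1|exact H2|exact H3|exact H4|exact T]|exact H5]. Qed.

Lemma Nneg X : SN_prov (Iff (Nn (Neg X)) (Neg (Nn X))).
Proof. refine (tmp1 _ _ (ax_F X) _); taut. Qed.

Lemma anti A B : SN_prov (Imp A B) -> SN_prov (Imp (Nn B) (Nn A)).
Proof.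
  intro H.
  assert (H1 : SN_prov (Neg (And A (Neg B)))) by (refine (tmp1 _ _ H _); taut).
  pose proof (rule_N _ H1) as H2.
  refine (tmp5 _ _ _ _ _ _ H2 (Nneg (Neg (And A (Neg B)))) (Nneg (And A (Neg B)))
    (ax_K A (Neg B)) (Nneg B) _); taut.
Qed.

Lemma congN A B : SN_prov (Iff A B) -> SN_prov (Iff (Nn A) (Nn B)).
Proof.
  intro H.
  assert (H1 : SN_prov (Imp A B)) by (refine (tmp1 _ _ H _); taut).
  assert (H2 : SN_prov (Imp B A)) by (refine (tmp1 _ _ H _); taut).
  refine (tmp2 _ _ _ (anti _ _ H2) (anti _ _ H1) _); taut.
Qed.

Lemma N_or B C : SN_prov (Iff (Nn (Or B C)) (And (Nn B) (Nn C))).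
Proof.
  assert (H : SN_prov (Iff (Or B C) (Neg (And (Neg B) (Neg C))))) by (apply ax_taut; taut).
  refine (tmp5 _ _ _ _ _ _ (congN _ _ H) (Nneg (And (Neg B) (Neg C))) (ax_K (Neg B) (Neg C))
    (Nneg B) (Nneg C) _); taut.
Qed.

Lemma NN B : SN_prov (Iff (Nn (Nn B)) B).
Proof.
  refine (tmp4 _ _ _ _ _ (ax_C B) (ax_C (Neg B)) (congN _ _ (Nneg B)) (Nneg (Nn B)) _); taut.
Qed.

Lemma N_top : SN_prov (Iff (Nn Top) Bot).
Proof.
  assert (H : SN_prov Top) by (apply ax_taut; taut).
  refine (tmp2 _ _ _ (rule_N _ H) (ax_F Top) _); taut.
Qed.

Lemma N_bot : SN_prov (Iff (Nn Bot) Top).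
Proof.
  assert (H : SN_prov Top) by (apply ax_taut; taut).
  assert (H2 : SN_prov (Imp Bot (Neg Top))) by (apply ax_taut; taut).
  refine (tmp2 _ _ _ (rule_N _ H) (anti _ _ H2) _); taut.
Qed.

Fixpoint tr (b : bool) (A : form) : form :=
  match A with
  | Atom p => if b then Nn (Atom p) else Atom p
  | Top => if b then Bot else Top
  | Bot => if b then Top else Bot
  | TT => TT
  | Neg B => Neg (tr b B)
  | And B C => if b then Or (tr b B) (tr b C) else And (tr b B) (tr b C)
  | Or B C => if b then And (tr b B) (tr b C) else Or (tr b B) (tr b C)
  | Imp B C => if b then And (Neg (tr b B)) (tr b C) else Imp (tr b B) (tr b C)
  | Nn B => tr (negb b) B
  end.

Lemma tr_iff A : forall b : bool, SN_prov (Iff (if b then Nn A else A) (tr b A)).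
Proof.
  induction A; intros []; simpl.
  - apply ax_taut; taut.
  - apply ax_taut; taut.
  - apply N_top.
  - apply ax_taut; taut.
  - apply N_bot.
  - apply ax_taut; taut.
  - refine (tmp1 _ _ ax_T _); taut.
  - apply ax_taut; taut.
  - refine (tmp2 _ _ _ (Nneg A) (IHA true) _); taut.
  - refine (tmp1 _ _ (IHA false) _); taut.
  - refine (tmp3 _ _ _ _ (ax_K A1 A2) (IHA1 true) (IHA2 true) _); taut.
  - refine (tmp2 _ _ _ (IHA1 false) (IHA2 false) _); taut.
  - refine (tmp3 _ _ _ _ (N_or A1 A2) (IHA1 true) (IHA2 true) _); taut.
  - refine (tmp2 _ _ _ (IHA1 false) (IHA2 false) _); taut.
  - assert (H : SN_prov (Iff (Imp A1 A2) (Or (Neg A1) A2))) by (apply ax_taut; taut).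
    refine (tmp5 _ _ _ _ _ _ (congN _ _ H) (N_or (Neg A1) A2) (Nneg A1) (IHA1 true) (IHA2 true) _); taut.
  - refine (tmp2 _ _ _ (IHA1 false) (IHA2 false) _); taut.
  - refine (tmp2 _ _ _ (NN A) (IHA false) _); taut.
  - exact (IHA true).
Qed.

Definition Kp (p : nat) : form :=
  And (Imp TT (Neg (And (Atom p) (Nn (Atom p)))))
      (Imp (Neg TT) (Or (Atom p) (Nn (Atom p)))).

Lemma Kp_prov p : SN_prov (Kp p).
Proof.
  set (Z := Imp TT (Imp (Atom p) (Nn (Neg (Atom p))))).
  pose proof (tr_iff Z true) as HT. simpl in HT.
  refine (tmp5 _ _ _ _ _ _ (ax_A p) (Nneg (Atom p)) (rule_N _ (ax_A p)) (Nneg Z) HT _).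
  unfold Z, Kp; taut.
Qed.

Lemma sat_ceval M m A :
  let f := fun X => if excluded_middle_informative (sat M m X) then true else false in
  ceval f A = true <-> sat M m A.
Proof.
  intro f.
  assert (Hf : forall X, f X = true <-> sat M m X).
  { intro X; unfold f; destruct (excluded_middle_informative (sat M m X)); split; auto; discriminate. }
  induction A; simpl; try apply Hf.
  - tauto.
  - split; [discriminate|tauto].
  - destruct (ceval f A); simpl in *; split; intros H;
      try reflexivity; try discriminate;
      try (intro Hs; apply IHA in Hs; discriminate);
      exfalso; apply H; apply IHA; reflexivity.
  - rewrite andb_true_iff; tauto.
  - rewrite orb_true_iff; tauto.
  - destruct (ceval f A1), (ceval f A2); simpl in *; split; intros H;
      try reflexivity; try discriminate;
      try (intro Hs; apply IHA1 in Hs; discriminate);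
      try (intros _; apply IHA2; reflexivity);
      apply IHA2, H, IHA1; reflexivity.
Qed.

Lemma sound A : SN_prov A -> forall M m, sat M m A.
Proof.
  induction 1; intros M m; simpl.
  - apply (sat_ceval M m A), H.
  - split; intros H.
    + destruct (classic (sat M (negb m) A)); [right; tauto | left; tauto].
    + tauto.
  - tauto.
  - rewrite negb_involutive; tauto.
  - intros -> Hp Hn. apply Hn. apply val_mono. exact Hp.
  - unfold w1; destruct m; simpl; split; intros; congruence.
  - apply IHSN_prov1; apply IHSN_prov2.
  - intro Hn; apply Hn; apply IHSN_prov.
Qed.

Inductive frag : form -> Prop :=
| fA p : frag (Atom p)
| fNA p : frag (Nn (Atom p))
| fTop : frag Top
| fBot : frag Bot
| fTT : frag TT
| fNeg B : frag B -> frag (Neg B)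
| fAnd B C : frag B -> frag C -> frag (And B C)
| fOr B C : frag B -> frag C -> frag (Or B C)
| fImp B C : frag B -> frag C -> frag (Imp B C).

Lemma frag_tr A : forall b, frag (tr b A).
Proof. induction A; intros []; simpl; auto using frag, fA, fNA, fTop, fBot, fTT, fNeg, fAnd, fOr, fImp. Qed.

Fixpoint cons (B : form) : form :=
  match B with
  | Atom p => Kp p
  | Nn C => match C with Atom p => Kp p | _ => Top end
  | Neg C => cons C
  | And C D | Or C D | Imp C D => And (cons C) (cons D)
  | _ => Top
  end.

Lemma cons_prov B : SN_prov (cons B).
Proof.
  induction B; simpl; try (apply ax_taut; taut); try apply Kp_prov; auto;
  try (refine (tmp2 _ _ _ IHB1 IHB2 _); taut).
  destruct B; try (apply ax_taut; taut). apply Kp_prov.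
Qed.

Definition vf (f : form -> bool) (p : nat) (w : world) : Prop :=
  if ceval f (Kp p) then (if Bool.eqb w (f TT) then f (Atom p) = true else f (Nn (Atom p)) = false)
  else True.

Lemma vf_mono f p : vf f p w1 -> vf f p w2.
Proof.
  unfold vf, Kp, w1, w2; simpl.
  destruct (f TT), (f (Atom p)), (f (Nn (Atom p))); simpl; auto; discriminate.
Qed.

Definition Mf f : SN_model := {| val := vf f; val_mono := vf_mono f |}.

Lemma vf_eq f p : ceval f (Kp p) = true ->
  (vf f p (f TT) <-> f (Atom p) = true) /\ (vf f p (negb (f TT)) <-> f (Nn (Atom p)) = false).
Proof.
  intro H; unfold vf; rewrite H. destruct (f TT); simpl; tauto.
Qed.

Lemma key f B : frag B -> ceval f (cons B) = true ->
  (sat (Mf f) (f TT) B <-> ceval f B = true).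
Proof.
  induction 1; simpl; intros Hc.
  - apply (vf_eq f p Hc).
  - destruct (vf_eq f p Hc) as [_ H2]. rewrite H2.
    destruct (f (Nn (Atom p))); split; intros; try discriminate; auto; congruence.
  - split; auto.
  - split; [tauto|discriminate].
  - unfold w1; tauto.
  - specialize (IHfrag Hc). destruct (ceval f B); simpl; split; intros; try discriminate; auto.
    + exfalso; apply H0; apply IHfrag; auto.
    + intro; apply IHfrag in H1; discriminate.
  - apply andb_true_iff in Hc as [H1 H2].
    rewrite andb_true_iff, (IHfrag1 H1), (IHfrag2 H2); tauto.
  - apply andb_true_iff in Hc as [H1 H2].
    rewrite orb_true_iff, (IHfrag1 H1), (IHfrag2 H2); tauto.
  - apply andb_true_iff in Hc as [H1 H2].
    rewrite (IHfrag1 H1), (IHfrag2 H2).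
    destruct (ceval f B), (ceval f C); simpl; split; intros; auto; discriminate.
Qed.

Lemma complete_frag B : frag B -> (forall M m, sat M m B) -> SN_prov B.
Proof.
  intros Hf Hv.
  refine (tmp1 _ _ (cons_prov B) _).
  intro f; simpl. destruct (ceval f (cons B)) eqn:E; simpl; auto.
  apply (key f B Hf E). apply Hv.
Qed.

Theorem theorem34 (A : form) :
  (forall M : SN_model, sat M w1 A /\ sat M w2 A) <-> SN_prov A.
Proof.
  split.
  - intro Hv.
    pose proof (tr_iff A false) as HI. simpl in HI.
    assert (HB : SN_prov (tr false A)).
    { apply complete_frag; [apply frag_tr|].
      intros M m. pose proof (sound _ HI M m) as S. simpl in S.
      apply (proj1 S). destruct m; apply (Hv M). }
    refine (tmp2 _ _ _ HI HB _); taut.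
  - intros H M; split; apply sound; auto.
Qed.
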